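(* Let $\Lambda$, $\Lambda_1$ be rings and let $T$ be a one-variable covariant functor from left $\Lambda$-modules to $\Lambda_1$-modules, with first left satellite $S_1T$. (i) If $T$ is half exact and of type $L\Sigma^{*}$, then $S_1T$ is of type $L\Sigma^{*}$. (ii) If $T$ is right exact, $S_1T$ is of type $L\Sigma^{*}$, and $T$ commutes with direct limits of projective modules, then $T$ is of type $L\Sigma^{*}$.
   Context: Direct systems $\{A^{\alpha},\varphi^{\alpha}_{\beta}\}$ of left $\Lambda$-modules are indexed by directed sets, with direct limit $\varinjlim A^\alpha$ and canonical maps $\sigma^{\alpha}:A^{\alpha}\to\varinjlim A^{\gamma}$. For a covariant functor $F$, the system $\{F(A^\alpha),F(\varphi^\alpha_\beta)\}$ is a direct system and there is a canonical homomorphism $\widehat\sigma:\varinjlim F(A^\alpha)\to F(\varinjlim A^\alpha)$ with $\widehat\sigma\circ\sigma^\alpha_F=F(\sigma^\alpha)$, where $\sigma^\alpha_F:F(A^\alpha)\to\varinjlim F(A^\gamma)$ is the canonical map. $F$ is of type $L\Sigma^{*}$ (commutes with direct limits) if $\widehat\sigma$ is an isomorphism for every direct system; ''$T$ commutes with direct limits of projective modules'' means $\widehat\sigma$ is an isomorphism for every direct system in which all modules $A^\alpha$ are projective. $T$ is half exact if for every short exact sequence $0\to A'\to A\to A''\to 0$ the sequence $T(A')\to T(A)\to T(A'')$ is exact, and right exact if $T(A')\to T(A)\to T(A'')\to 0$ is exact. Left satellite: for a module $A$ choose a short exact sequence $0\to M\to P\to A\to 0$ with $P$ projective, and set $S_1T(A)=\operatorname{Ker}(T(M)\to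 T(P))$; for $g:A'\to A$, lifting $g$ to maps $P'\to P$, $M'\to M$ between chosen sequences, $S_1T(g)$ is the map $S_1T(A')\to S_1T(A)$ induced by $T(M')\to T(M)$, which is independent of the choices. This makes $S_1T$ a covariant functor. *)

(* Defs.v *)
From HB Require Import structures.
From mathcomp Require Import all_boot all_algebra.
Set Implicit Arguments. Unset Strict Implicit. Unset Printing Implicit Defensive.
Import GRing.Theory.
Local Open Scope ring_scope.

(* Additive covariant functors from left R-modules to left S-modules.
   Morphisms are R-linear maps; the functor laws and additivity are
   stated pointwise (so they also give extensionality). *)
Record Functor (R S : pzRingType) := {
  Fobj :> lmodType R -> lmodType S;
  Fmap : forall A B : lmodType R, {linear A -> B} -> {linear Fobj A -> Fobj B};
  Fmap_id : forall (A : lmodType R) (f : {linear A -> A}),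
      (forall x, f x = x) -> forall y, Fmap f y = y;
  Fmap_comp : forall (A B C : lmodType R) (f : {linear A -> B})
      (g : {linear B -> C}) (h : {linear A -> C}),
      (forall x, h x = g (f x)) -> forall y, Fmap h y = Fmap g (Fmap f y);
  Fmap_add : forall (A B : lmodType R) (f g h : {linear A -> B}),
      (forall x, h x = f x + g x) -> forall y, Fmap h y = Fmap f y + Fmap g y
}.
Arguments Fmap {R S} f {A B} : rename.

Record directed_set := {
  dI :> Type;
  dle : dI -> dI -> Prop;
  dle_refl : forall a, dle a a;
  dle_trans : forall a b c, dle a b -> dle b c -> dle a c;
  dle_directed : forall a b, exists c, dle a c /\ dle b c;
  d_nonempty : inhabited dI
}.

Record dsystem (R : pzRingType) (I : directed_set) := {
  dobj :> I -> lmodType R;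
  dmap : forall a b : I, dle a b -> {linear dobj a -> dobj b};
  dmap_id : forall a (h : dle a a) x, dmap h x = x;
  dmap_comp : forall a b c (hab : dle a b) (hbc : dle b c) (hac : dle a c) x,
      dmap hac x = dmap hbc (dmap hab x)
}.
Arguments dmap {R I} d {a b} : rename.

Definition is_direct_limit (R : pzRingType) (I : directed_set)
  (obj : I -> lmodType R) (map : forall a b : I, dle a b -> obj a -> obj b)
  (L : lmodType R) (sigma : forall a, {linear obj a -> L}) : Prop :=
  (forall a b (h : dle a b) x, sigma b (map a b h x) = sigma a x) /\
  (forall (X : lmodType R) (tau : forall a, {linear obj a -> X}),
     (forall a b (h : dle a b) x, tau b (map a b h x) = tau a x) ->
     (exists u : {linear L -> X}, forall a x, u (sigma a x) = tau a x) /\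
     (forall u v : {linear L -> X},
        (forall a x, u (sigma a x) = tau a x) ->
        (forall a x, v (sigma a x) = tau a x) -> forall y, u y = v y)).

(* F is of type L-Sigma^*: the canonical map lim F(A^a) -> F(lim A^a) is an
   isomorphism, i.e. F carries direct limits to direct limits. *)
Definition type_LSigma (R S : pzRingType) (F : Functor R S) : Prop :=
  forall (I : directed_set) (D : dsystem R I) (L : lmodType R)
         (sigma : forall a, {linear D a -> L}),
    is_direct_limit (fun a b h => dmap D h) sigma ->
    is_direct_limit (fun a b h => Fmap F (dmap D h)) (fun a => Fmap F (sigma a)).

Definition projective (R : pzRingType) (P : lmodType R) : Prop :=
  forall (B C : lmodType R) (g : {linear B -> C}) (f : {linear P -> C}),
    (forall c, exists b, g b = c) ->
    exists h : {linear P -> B}, forall x, g (h x) = f x.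

Definition LSigma_projective (R S : pzRingType) (F : Functor R S) : Prop :=
  forall (I : directed_set) (D : dsystem R I) (L : lmodType R)
         (sigma : forall a, {linear D a -> L}),
    (forall a, projective (D a)) ->
    is_direct_limit (fun a b h => dmap D h) sigma ->
    is_direct_limit (fun a b h => Fmap F (dmap D h)) (fun a => Fmap F (sigma a)).

Definition short_exact (R : pzRingType) (A' A A'' : lmodType R)
  (f : {linear A' -> A}) (g : {linear A -> A''}) : Prop :=
  injective f /\ (forall c, exists b, g b = c) /\
  (forall x, g x = 0 <-> exists y, f y = x).

Definition exact_at (R : pzRingType) (A' A A'' : lmodType R)
  (f : {linear A' -> A}) (g : {linear A -> A''}) : Prop :=
  forall x, g x = 0 <-> exists y, f y = x.

Definition half_exact (R S : pzRingType) (T : Functor R S) : Prop :=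
  forall (A' A A'' : lmodType R) (f : {linear A' -> A}) (g : {linear A -> A''}),
    short_exact f g -> exact_at (Fmap T f) (Fmap T g).

Definition right_exact (R S : pzRingType) (T : Functor R S) : Prop :=
  forall (A' A A'' : lmodType R) (f : {linear A' -> A}) (g : {linear A -> A''}),
    short_exact f g ->
    exact_at (Fmap T f) (Fmap T g) /\ (forall z, exists y, Fmap T g y = z).

Record presentation (R : pzRingType) := {
  presP : lmodType R -> lmodType R;
  presM : lmodType R -> lmodType R;
  pres_i : forall A, {linear presM A -> presP A};
  pres_p : forall A, {linear presP A -> A};
  presP_proj : forall A, projective (presP A);
  pres_exact : forall A, short_exact (pres_i A) (pres_p A)
}.

(* S is the first left satellite S_1 T computed from the presentation pr:
   iota A identifies S A with Ker (T (M A) -> T (P A)), and S g is the map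
   induced by T (gM) for any lift (gP, gM) of g. *)
Definition first_left_satellite (R S1 : pzRingType) (T S : Functor R S1)
  (pr : presentation R) (iota : forall A, {linear S A -> T (presM pr A)}) : Prop :=
  (forall A, injective (iota A)) /\
  (forall A y, (exists s, iota A s = y) <-> Fmap T (pres_i pr A) y = 0) /\
  (forall (A' A : lmodType R) (g : {linear A' -> A})
          (gP : {linear presP pr A' -> presP pr A})
          (gM : {linear presM pr A' -> presM pr A}),
     (forall x, pres_p pr A (gP x) = g (pres_p pr A' x)) ->
     (forall x, pres_i pr A (gM x) = gP (pres_i pr A' x)) ->
     forall s, iota A (Fmap S g s) = Fmap T gM (iota A' s)).

(* Main.v *)
From HB Require Import structures.
From mathcomp Require Import all_boot all_algebra.
From mathcomp Require Import boolp.
Require Import Defs.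
Set Implicit Arguments. Unset Strict Implicit. Unset Printing Implicit Defensive.
Import GRing.Theory.
Local Open Scope ring_scope.

Section Mklin.
Variables (R : pzRingType) (U V : lmodType R).
Definition mklin (f : U -> V) (H : linear f) : {linear U -> V} :=
  HB.pack f (GRing.isLinear.Build R U V *:%R f H).
Lemma mklinE f H x : @mklin f H x = f x. Proof. by []. Qed.
End Mklin.

Section Prodm.
Variables (R : pzRingType) (T : Type) (M : T -> lmodType R).
Definition prodm := forall t, M t.
HB.instance Definition _ := gen_eqMixin prodm.
HB.instance Definition _ := gen_choiceMixin prodm.
Definition pzero : prodm := fun t => 0.
Definition popp (f : prodm) : prodm := fun t => - f t.
Definition padd (f g : prodm) : prodm := fun t => f t + g t.
Definition pscale (r : R) (f : prodm) : prodm := fun t => r *: f t.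
Lemma paddA : associative padd.
Proof. by move=> f g h; apply: functional_extensionality_dep => t; rewrite /padd addrA. Qed.
Lemma paddC : commutative padd.
Proof. by move=> f g; apply: functional_extensionality_dep => t; rewrite /padd addrC. Qed.
Lemma padd0 : left_id pzero padd.
Proof. by move=> f; apply: functional_extensionality_dep => t; rewrite /padd add0r. Qed.
Lemma paddN : left_inverse pzero popp padd.
Proof. by move=> f; apply: functional_extensionality_dep => t; rewrite /padd /popp addNr. Qed.
HB.instance Definition _ := GRing.isZmodule.Build prodm paddA paddC padd0 paddN.
Lemma pscaleA a b v : pscale a (pscale b v) = pscale (a * b) v.
Proof. by apply: functional_extensionality_dep => t; rewrite /pscale scalerA. Qed.
Lemma pscale1 : left_id 1 pscale.
Proof. by move=> v; apply: functional_extensionality_dep => t; rewrite /pscale scale1r. Qed.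
Lemma pscaleDr : right_distributive pscale +%R.
Proof. by move=> a u v; apply: functional_extensionality_dep => t; rewrite /pscale /= /padd scalerDr. Qed.
Lemma pscaleDl v : {morph pscale^~ v: a b / a + b}.
Proof. by move=> a b; apply: functional_extensionality_dep => t; rewrite /pscale /= /padd scalerDl. Qed.
HB.instance Definition _ := GRing.Zmodule_isLmodule.Build R prodm pscaleA pscale1 pscaleDr pscaleDl.
Lemma prodm_addE (f g : prodm) t : (f + g) t = f t + g t. Proof. by []. Qed.
Lemma prodm_scaleE r (f : prodm) t : (r *: f) t = r *: f t. Proof. by []. Qed.
Lemma prodm_zeroE t : (0 : prodm) t = 0. Proof. by []. Qed.
Lemma prodm_oppE (f : prodm) t : (- f) t = - f t. Proof. by []. Qed.
End Prodm.

Record submod (R : pzRingType) (A : lmodType R) := Submod {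
  sp :> A -> Prop;
  sp0 : sp 0;
  spD : forall x y, sp x -> sp y -> sp (x + y);
  spZ : forall r x, sp x -> sp (r *: x) }.

Section SubmodTh.
Variables (R : pzRingType) (A : lmodType R) (S : submod A).
Lemma spN x : S x -> S (- x).
Proof. by move=> Sx; rewrite -scaleN1r; apply: spZ. Qed.
Lemma spB x y : S x -> S y -> S (x - y).
Proof. by move=> Sx Sy; apply: spD => //; apply: spN. Qed.
End SubmodTh.

Section Subm.
Variables (R : pzRingType) (A : lmodType R) (S : submod A).
Definition subm := {x : A | S x}.
HB.instance Definition _ := gen_eqMixin subm.
HB.instance Definition _ := gen_choiceMixin subm.
Definition sval' (x : subm) : A := proj1_sig x.
Lemma subm_eq (x y : subm) : sval' x = sval' y -> x = y.
Proof. case: x y => [x Hx] [y Hy] /= E; subst y; congr exist; exact: Prop_irrelevance. Qed.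
Definition szero : subm := exist _ 0 (sp0 S).
Definition sopp (x : subm) : subm := exist _ (- sval' x) (spN (proj2_sig x)).
Definition sadd (x y : subm) : subm := exist _ (sval' x + sval' y) (spD (proj2_sig x) (proj2_sig y)).
Definition sscale r (x : subm) : subm := exist _ (r *: sval' x) (spZ r (proj2_sig x)).
Lemma saddA : associative sadd.
Proof. by move=> x y z; apply: subm_eq; rewrite /= addrA. Qed.
Lemma saddC : commutative sadd.
Proof. by move=> x y; apply: subm_eq; rewrite /= addrC. Qed.
Lemma sadd0 : left_id szero sadd.
Proof. by move=> x; apply: subm_eq; rewrite /= add0r. Qed.
Lemma saddN : left_inverse szero sopp sadd.
Proof. by move=> x; apply: subm_eq; rewrite /= addNr. Qed.
HB.instance Definition _ := GRing.isZmodule.Build subm saddA saddC sadd0 saddN.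
Lemma sscaleA a b v : sscale a (sscale b v) = sscale (a * b) v.
Proof. by apply: subm_eq; rewrite /= scalerA. Qed.
Lemma sscale1 : left_id 1 sscale.
Proof. by move=> v; apply: subm_eq; rewrite /= scale1r. Qed.
Lemma sscaleDr : right_distributive sscale +%R.
Proof. by move=> a u v; apply: subm_eq; rewrite /= scalerDr. Qed.
Lemma sscaleDl v : {morph sscale^~ v: a b / a + b}.
Proof. by move=> a b; apply: subm_eq; rewrite /= scalerDl. Qed.
HB.instance Definition _ := GRing.Zmodule_isLmodule.Build R subm sscaleA sscale1 sscaleDr sscaleDl.
Lemma sval_lin : linear sval'. Proof. by []. Qed.
Definition incl : {linear subm -> A} := mklin sval_lin.
Lemma inclE x : incl x = sval' x. Proof. by []. Qed.
Lemma incl_inj : injective incl. Proof. by move=> x y; apply: subm_eq. Qed.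
Definition mksub (x : A) (H : S x) : subm := exist _ x H.
Lemma mksubE x H : incl (@mksub x H) = x. Proof. by []. Qed.
Lemma sub_in (x : subm) : S (incl x). Proof. exact: proj2_sig x. Qed.
End Subm.

Section Quot.
Variables (R : pzRingType) (A : lmodType R) (S : submod A).
Definition cls (x : A) : A -> Prop := fun y => S (x - y).
Definition quot := {P : A -> Prop | exists x, P = cls x}.
HB.instance Definition _ := gen_eqMixin quot.
HB.instance Definition _ := gen_choiceMixin quot.
Definition qmk (x : A) : quot := exist _ (cls x) (ex_intro _ x erefl).
Definition qrep (q : quot) : A := proj1_sig (cid (proj2_sig q)).
Lemma qrepK q : qmk (qrep q) = q.
Proof.
rewrite /qrep; case: (cid _) => x Hx /=; case: q Hx => P HP /= E; subst P.
by congr exist; exact: Prop_irrelevance.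
Qed.
Lemma quot_eq (q1 q2 : quot) : proj1_sig q1 = proj1_sig q2 -> q1 = q2.
Proof. case: q1 q2 => [P HP] [Q HQ] /= E; subst Q; congr exist; exact: Prop_irrelevance. Qed.
Lemma subr_shift (x y z : A) : y - z = (x - z) - (x - y).
Proof. by rewrite opprB [_ + (y - x)]addrC addrA subrK. Qed.
Lemma qmk_eq x y : qmk x = qmk y <-> S (x - y).
Proof.
split.
  move=> /(congr1 (@proj1_sig _ _)) /= E.
  have : cls y y by rewrite /cls subrr; apply: sp0.
  by rewrite -E.
move=> Sxy; apply: quot_eq => /=.
apply: funext => z; apply: propext; rewrite /cls; split => H.
  by rewrite (subr_shift x); apply: spB.
rewrite (subr_shift y); apply: spB => //.
by rewrite -opprB; apply: spN.
Qed.
Definition qzero : quot := qmk 0.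
Definition qopp (q : quot) := qmk (- qrep q).
Definition qadd (q1 q2 : quot) := qmk (qrep q1 + qrep q2).
Definition qscale r (q : quot) := qmk (r *: qrep q).
Lemma qrep_eq x : S (qrep (qmk x) - x).
Proof. by apply/qmk_eq; rewrite qrepK. Qed.
Lemma qoppE x : qopp (qmk x) = qmk (- x).
Proof. by apply/qmk_eq; rewrite -opprD; apply: spN; apply: qrep_eq. Qed.
Lemma qaddE x y : qadd (qmk x) (qmk y) = qmk (x + y).
Proof.
apply/qmk_eq.
have -> : qrep (qmk x) + qrep (qmk y) - (x + y) = (qrep (qmk x) - x) + (qrep (qmk y) - y).
  by rewrite opprD addrACA.
by apply: spD; apply: qrep_eq.
Qed.
Lemma qscaleE r x : qscale r (qmk x) = qmk (r *: x).
Proof. by apply/qmk_eq; rewrite -scalerBr; apply: spZ; apply: qrep_eq. Qed.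
Lemma quot_ind (P : quot -> Prop) : (forall x, P (qmk x)) -> forall q, P q.
Proof. by move=> H q; rewrite -(qrepK q). Qed.
Lemma qaddA : associative qadd.
Proof. by elim/quot_ind => x; elim/quot_ind => y; elim/quot_ind => z; rewrite !qaddE addrA. Qed.
Lemma qaddC : commutative qadd.
Proof. by elim/quot_ind => x; elim/quot_ind => y; rewrite !qaddE addrC. Qed.
Lemma qadd0 : left_id qzero qadd.
Proof. by elim/quot_ind => x; rewrite /qzero !qaddE add0r. Qed.
Lemma qaddN : left_inverse qzero qopp qadd.
Proof. by elim/quot_ind => x; rewrite qoppE !qaddE addNr. Qed.
HB.instance Definition _ := GRing.isZmodule.Build quot qaddA qaddC qadd0 qaddN.
Lemma qaddE' x y : qmk x + qmk y = qmk (x + y). Proof. exact: qaddE. Qed.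
Lemma qscaleA a b v : qscale a (qscale b v) = qscale (a * b) v.
Proof. by elim/quot_ind: v => x; rewrite !qscaleE scalerA. Qed.
Lemma qscale1 : left_id 1 qscale.
Proof. by elim/quot_ind => x; rewrite !qscaleE scale1r. Qed.
Lemma qscaleDr : right_distributive qscale +%R.
Proof. by move=> a; elim/quot_ind => x; elim/quot_ind => y; rewrite [qmk x + _]qaddE' !qscaleE qaddE' scalerDr. Qed.
Lemma qscaleDl v : {morph qscale^~ v: a b / a + b}.
Proof. by move=> a b; elim/quot_ind: v => x; rewrite !qscaleE qaddE' scalerDl. Qed.
HB.instance Definition _ := GRing.Zmodule_isLmodule.Build R quot qscaleA qscale1 qscaleDr qscaleDl.
Lemma qmk_lin : linear qmk.
Proof. by move=> r x y; rewrite -qaddE'; congr (_ + _); exact: (esym (qscaleE r x)). Qed.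
Definition qlin : {linear A -> quot} := mklin qmk_lin.
Lemma qlinE x : qlin x = qmk x. Proof. by []. Qed.
Lemma qlin0 x : qlin x = 0 <-> S x.
Proof. by rewrite qlinE; have -> : (0 : quot) = qmk 0 by []; rewrite qmk_eq subr0. Qed.
End Quot.

Section Lim.
Variables (R : pzRingType) (I : directed_set) (obj : I -> lmodType R)
  (map : forall a b : I, dle a b -> {linear obj a -> obj b}).
Hypothesis map_comp : forall a b c (hab : dle a b) (hbc : dle b c) (hac : dle a c) x,
  map hac x = map hbc (map hab x).

Definition cocone (L : lmodType R) (sigma : forall a, {linear obj a -> L}) :=
  forall a b (h : dle a b) x, sigma b (map h x) = sigma a x.

Definition elim (L : lmodType R) (sigma : forall a, {linear obj a -> L}) :=
  cocone sigma /\ (forall y : L, exists a x, sigma a x = y) /\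
  (forall a x, sigma a x = 0 -> exists b (h : dle a b), map h x = 0).

Lemma elim_univ (L : lmodType R) (sigma : forall a, {linear obj a -> L}) : elim sigma -> is_direct_limit (fun a b h => map h) sigma.
Proof.
move=> [Hco [Hsurj Hker]]; split; first exact: Hco.
move=> X tau Htau.
have wd : forall a b x y, sigma a x = sigma b y -> tau a x = tau b y.
  move=> a b x y E; case: (dle_directed a b) => c [hac hbc].
  have : sigma c (map hac x - map hbc y) = 0 by rewrite linearB /= !Hco E subrr.
  case/Hker => d [hcd Hd].
  have had := dle_trans hac hcd; have hbd := dle_trans hbc hcd.
  rewrite -(Htau _ _ had x) -(Htau _ _ hbd y).
  rewrite (map_comp hac hcd had) (map_comp hbc hcd hbd).
  by move/eqP: Hd; rewrite linearB subr_eq0 => /eqP ->.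
have rep : forall y, {p : {a : I & obj a} | sigma (projT1 p) (projT2 p) = y}.
  by move=> y; apply: cid; case: (Hsurj y) => a [x E]; exists (existT _ a x).
pose u0 y := tau (projT1 (sval (rep y))) (projT2 (sval (rep y))).
have u0E : forall a x, u0 (sigma a x) = tau a x.
  by move=> a x; rewrite /u0; apply: wd; case: (rep _).
have lin : linear u0.
  move=> r y z; case: (Hsurj y) => a [x <-]; case: (Hsurj z) => b [w <-].
  case: (dle_directed a b) => c [hac hbc].
  rewrite -(Hco _ _ hac x) -(Hco _ _ hbc w) -linearP !u0E linearP.
  by rewrite !Htau.
split.
  by exists (mklin lin) => a x; rewrite mklinE u0E.
move=> u v Hu Hv y; case: (Hsurj y) => a [x <-].
by rewrite Hu Hv.
Qed.

Definition zlin (U V : lmodType R) : {linear U -> V}.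
Proof. refine (@mklin R U V (fun _ => 0) _); by move=> r x y; rewrite scaler0 addr0. Defined.
Lemma zlinE (U V : lmodType R) x : zlin U V x = 0. Proof. by []. Qed.

Definition complin (U V W : lmodType R) (g : {linear V -> W}) (f : {linear U -> V}) : {linear U -> W}.
Proof. refine (@mklin R U W (fun x => g (f x)) _); by move=> r x y; rewrite !linearP. Defined.
Lemma complinE (U V W : lmodType R) (g : {linear V -> W}) (f : {linear U -> V}) x :
  complin g f x = g (f x). Proof. by []. Qed.

Definition fam a (x : obj a) : prodm obj := fun b =>
  match pselect (dle a b) with left h => map h x | right _ => 0 end.
Lemma fam_lin a : linear (@fam a).
Proof.
move=> r x y; apply: functional_extensionality_dep => b.
rewrite /fam prodm_addE prodm_scaleE; case: pselect => h.
  by rewrite linearP.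
by rewrite scaler0 addr0.
Qed.

Definition evz_sp (f : prodm obj) : Prop := exists c, forall b, dle c b -> f b = 0.
Lemma evz0 : evz_sp 0.
Proof. by case: (d_nonempty I) => a; exists a. Qed.
Lemma evzD f g : evz_sp f -> evz_sp g -> evz_sp (f + g).
Proof.
move=> [c1 H1] [c2 H2]; case: (dle_directed c1 c2) => c [h1 h2]; exists c => b hb.
by rewrite prodm_addE H1 ?H2 ?addr0 //; apply: dle_trans hb.
Qed.
Lemma evzZ r f : evz_sp f -> evz_sp (r *: f).
Proof. by move=> [c H]; exists c => b hb; rewrite prodm_scaleE H // scaler0. Qed.
Definition evz := Submod evz0 evzD evzZ.

Lemma univ_elim (L : lmodType R) (sigma : forall a, {linear obj a -> L}) : is_direct_limit (fun a b h => map h) sigma -> elim sigma.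
Proof.
move=> [Hco Huniv]; split; first exact: Hco.
split.
  pose im (y : L) := exists a x, sigma a x = y.
  have im0 : im 0 by case: (d_nonempty I) => a; exists a, 0; rewrite linear0.
  have imD : forall x y, im x -> im y -> im (x + y).
    move=> _ _ [a [x <-]] [b [y <-]]; case: (dle_directed a b) => c [hac hbc].
    by exists c, (map hac x + map hbc y); rewrite linearD /= !Hco.
  have imZ : forall r x, im x -> im (r *: x).
    by move=> r _ [a [x <-]]; exists a, (r *: x); rewrite linearZ.
  pose S := Submod im0 imD imZ.
  have [_ Hun] := Huniv (quot S) (fun a => zlin _ _) (fun a b h x => erefl).
  move=> y; apply/(qlin0 S); rewrite (Hun (qlin S) (zlin _ _)) //.
  by move=> a x; apply/(qlin0 S); exists a, x.
move=> a x Hx.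
pose tau b := complin (qlin evz) (mklin (@fam_lin b)).
have Htau : forall a b (h : dle a b) x, tau b (map h x) = tau a x.
  move=> a' b h y; rewrite !complinE !mklinE; apply/qmk_eq.
  exists b => d hbd; rewrite prodm_addE prodm_oppE /fam.
  case: pselect => [hbd'|]; last by [].
  case: pselect => [had|nad]; last by case: nad; apply: dle_trans hbd'.
  by rewrite -(map_comp h hbd' had) subrr.
have [[u Hu] _] := Huniv (quot evz) tau Htau.
have := Hu a x; rewrite Hx linear0 complinE mklinE => /esym /(qlin0 evz) [c Hc].
case: (dle_directed a c) => d [had hcd]; exists d, had.
have := Hc d hcd; rewrite /fam; case: pselect => [h'|]; last by [].
by rewrite (map_comp had (dle_refl d) h') => <-; rewrite (map_comp had (dle_refl d) had).
Qed.
End Lim.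

Section Free.
Variables (R : pzRingType) (K : choiceType).
Definition Rfun := prodm (fun _ : K => (R^o : lmodType R)).
Definition fin_sp (f : Rfun) : Prop := exists s : seq K, forall x, x \notin s -> f x = 0.
Lemma fin0 : fin_sp 0. Proof. by exists [::]. Qed.
Lemma finD f g : fin_sp f -> fin_sp g -> fin_sp (f + g).
Proof.
move=> [s Hs] [t Ht]; exists (s ++ t) => x; rewrite mem_cat negb_or => /andP [xs xt].
by rewrite prodm_addE Hs ?Ht ?addr0.
Qed.
Lemma finZ r f : fin_sp f -> fin_sp (r *: f).
Proof. by move=> [s Hs]; exists s => x xs; rewrite prodm_scaleE Hs // scaler0. Qed.
Definition fin_sm := Submod fin0 finD finZ.
Definition fs := subm fin_sm.
Definition fv (f : fs) (x : K) : R := sval' f x.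
Lemma fv_eq (f g : fs) : (forall x, fv f x = fv g x) -> f = g.
Proof. by move=> H; apply: subm_eq; apply: functional_extensionality_dep. Qed.
Lemma fvD f g x : fv (f + g) x = fv f x + fv g x. Proof. by []. Qed.
Lemma fvZ r f x : fv (r *: f) x = r * fv f x. Proof. by []. Qed.
Lemma fv0 x : fv 0 x = 0. Proof. by []. Qed.
Lemma fvN f x : fv (- f) x = - fv f x. Proof. by []. Qed.
Lemma fv_lin x : linear (fun f : fs => (fv f x : R^o)). Proof. by move=> r f g; rewrite fvD fvZ. Qed.
Definition fvlin x : {linear fs -> R^o} := @mklin R fs R^o _ (fv_lin x).
Lemma fv_sum (I : Type) (s : seq I) (P : pred I) (F : I -> fs) x :
  fv (\sum_(i <- s | P i) F i) x = \sum_(i <- s | P i) fv (F i) x.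
Proof. by have := linear_sum (fvlin x) s P F. Qed.

Definition delta (k : K) : fs.
refine (@mksub _ _ fin_sm (fun x => if x == k then 1 else 0) _).
by exists [:: k] => x; rewrite inE => /negbTE ->.
Defined.
Lemma deltaE k x : fv (delta k) x = if x == k then 1 else 0. Proof. by []. Qed.

Definition supp (f : fs) : seq K := undup (proj1_sig (cid (proj2_sig f))).
Lemma supp_uniq f : uniq (supp f). Proof. exact: undup_uniq. Qed.
Lemma supp_cov f x : x \notin supp f -> fv f x = 0.
Proof. rewrite /supp mem_undup; case: (cid _) => s Hs /=; exact: Hs. Qed.

Definition fsum (M : lmodType R) (f : fs) (g : K -> M) : M :=
  \sum_(x <- supp f) fv f x *: g x.

Lemma fsum_cover (M : lmodType R) (f : fs) (g : K -> M) (s : seq K) :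
  uniq s -> (forall x, x \notin s -> fv f x = 0) ->
  fsum f g = \sum_(x <- s) fv f x *: g x.
Proof.
move=> us Hs.
have E : forall t : seq K, \sum_(x <- t) fv f x *: g x =
     \sum_(x <- [seq y <- t | fv f y != 0]) fv f x *: g x.
  move=> t; rewrite [in RHS]big_filter [in RHS]big_mkcond /=; apply: eq_bigr => x _.
  by case: eqP => // ->; rewrite scale0r.
rewrite /fsum E (E s); apply: perm_big; apply: uniq_perm.
- exact: filter_uniq (supp_uniq f).
- exact: filter_uniq.
move=> x; rewrite !mem_filter; case: eqP => //= nz.
apply/idP/idP => _.
  by apply: contraT => /Hs.
by apply: contraT => /supp_cov.
Qed.

Lemma cover_cat (f g : fs) : forall x, x \notin undup (supp f ++ supp g) -> fv f x = 0 /\ fv g x = 0.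
Proof.
by move=> x; rewrite mem_undup mem_cat negb_or => /andP [a b]; rewrite !supp_cov.
Qed.

Lemma fsumD (M : lmodType R) f g (h : K -> M) : fsum (f + g) h = fsum f h + fsum g h.
Proof.
have u := undup_uniq (supp f ++ supp g).
rewrite (fsum_cover _ u); last by move=> x /cover_cat [a b]; rewrite fvD a b addr0.
rewrite (fsum_cover _ u); last by move=> x /cover_cat [].
rewrite (fsum_cover _ u); last by move=> x /cover_cat [].
by rewrite -big_split; apply: eq_bigr => x _; rewrite fvD scalerDl.
Qed.

Lemma fsumZ (M : lmodType R) r f (h : K -> M) : fsum (r *: f) h = r *: fsum f h.
Proof.
rewrite (fsum_cover _ (supp_uniq f)); last by move=> x /supp_cov; rewrite fvZ => ->; rewrite mulr0.
by rewrite /fsum scaler_sumr; apply: eq_bigr => x _; rewrite fvZ scalerA.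
Qed.

Lemma fsum_delta (M : lmodType R) k (h : K -> M) : fsum (delta k) h = h k.
Proof.
rewrite (@fsum_cover M (delta k) h [:: k]) //; last by move=> x; rewrite inE deltaE => /negbTE ->.
by rewrite big_seq1 deltaE eqxx scale1r.
Qed.

Lemma fsum_lin (M N : lmodType R) (L : {linear M -> N}) f (h : K -> M) :
  L (fsum f h) = fsum f (fun x => L (h x)).
Proof. by rewrite /fsum linear_sum; apply: eq_bigr => x _; rewrite linearZ. Qed.

Lemma fsum_eq (M : lmodType R) f (h h' : K -> M) :
  (forall x, fv f x != 0 -> h x = h' x) -> fsum f h = fsum f h'.
Proof.
move=> H; apply: eq_bigr => x _; case: (eqVneq (fv f x) 0) => [->|/H ->].
  by rewrite !scale0r.
by [].
Qed.

Lemma fsum_decomp f : fsum f delta = f.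
Proof.
apply: fv_eq => x; rewrite /fsum fv_sum.
have E : forall y, fv (fv f y *: delta y) x = if y == x then fv f x else 0.
  by move=> y; rewrite fvZ deltaE eq_sym; case: eqP => [->|]; rewrite ?mulr1 ?mulr0.
under eq_bigr do rewrite E.
case: (boolP (x \in supp f)) => xs.
  rewrite (bigD1_seq x xs (supp_uniq f)) /= eqxx big1 ?addr0 //.
  by move=> y /negbTE ->.
rewrite big_seq big1 ?supp_cov // => y ys.
have : y != x by apply: contraNneq xs => <-.
by move/negbTE ->.
Qed.
End Free.

Section FreeFun.
Variable (R : pzRingType).
Local Notation F A := (fs R A).

Definition Fm (A B : lmodType R) (f : A -> B) (p : F A) : F B := fsum p (fun x => delta R (f x)).
Lemma Fm_lin (A B : lmodType R) (f : A -> B) : linear (Fm f).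
Proof. by move=> r p q; rewrite /Fm fsumD fsumZ. Qed.
Definition FmL (A B : lmodType R) (f : A -> B) : {linear F A -> F B} := mklin (Fm_lin f).
Lemma FmLE (A B : lmodType R) (f : A -> B) p : FmL f p = Fm f p. Proof. by []. Qed.

Lemma Fm_delta (A B : lmodType R) (f : A -> B) x : Fm f (delta R x) = delta R (f x).
Proof. by rewrite /Fm fsum_delta. Qed.
Lemma Fm_id (A : lmodType R) (f : A -> A) : (forall x, f x = x) -> forall p, Fm f p = p.
Proof. by move=> H p; rewrite /Fm -[RHS]fsum_decomp; apply: fsum_eq => x _; rewrite H. Qed.
Lemma Fm_comp (A B C : lmodType R) (f : A -> B) (g : B -> C) (h : A -> C) :
  (forall x, h x = g (f x)) -> forall p, Fm h p = Fm g (Fm f p).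
Proof.
move=> H p; have -> : Fm g (Fm f p) = FmL g (fsum p (fun x => delta R (f x))) by [].
rewrite fsum_lin; apply: fsum_eq => x _.
by rewrite FmLE Fm_delta H.
Qed.
Lemma Fm_ext (A B : lmodType R) (f g : A -> B) : (forall x, f x = g x) -> forall p, Fm f p = Fm g p.
Proof. by move=> H p; apply: fsum_eq => x _; rewrite H. Qed.

Lemma fv_Fm (A B : lmodType R) (f : A -> B) p w :
  fv (Fm f p) w = \sum_(x <- supp p) fv p x * (if f x == w then 1 else 0).
Proof.
rewrite /Fm /fsum fv_sum; apply: eq_bigr => x _.
by rewrite fvZ deltaE eq_sym.
Qed.

Definition pA (A : lmodType R) (p : F A) : A := fsum p id.
Lemma pA_lin (A : lmodType R) : linear (@pA A).
Proof. by move=> r p q; rewrite /pA fsumD fsumZ. Qed.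
Definition pAL (A : lmodType R) : {linear F A -> A} := mklin (@pA_lin A).
Lemma pALE (A : lmodType R) p : pAL A p = pA p. Proof. by []. Qed.
Lemma pA_delta (A : lmodType R) (x : A) : pA (delta R x) = x.
Proof. by rewrite /pA fsum_delta. Qed.
Lemma pA_nat (A B : lmodType R) (f : {linear A -> B}) p : f (pA p) = pA (Fm f p).
Proof.
have -> : pA (Fm f p) = pAL B (fsum p (fun x => delta R (f x))) by [].
rewrite fsum_lin fsum_lin; apply: fsum_eq => x _.
exact: (esym (pA_delta _)).
Qed.

Lemma F_proj (A : lmodType R) : projective (F A).
Proof.
move=> B C g f Hg.
have b : forall x : A, {b : B | g b = f (delta R x)} by move=> x; apply: cid; apply: Hg.
pose h0 (p : F A) := fsum p (fun x => sval (b x)).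
have hl : linear h0 by move=> r p q; rewrite /h0 fsumD fsumZ.
exists (mklin hl) => p; rewrite mklinE /h0 fsum_lin.
rewrite -[in RHS](fsum_decomp p) fsum_lin; apply: fsum_eq => x _.
by case: (b x).
Qed.

Lemma fv_supp (K : choiceType) (p : fs R K) x : fv p x != 0 -> x \in supp p.
Proof. by move=> H; apply: contraT => /supp_cov E; rewrite E eqxx in H. Qed.

Definition kerS_sp (A B : lmodType R) (f : {linear A -> B}) (x : A) : Prop := f x = 0.
Lemma kerS0 (A B : lmodType R) (f : {linear A -> B}) : kerS_sp f 0.
Proof. by rewrite /kerS_sp linear0. Qed.
Lemma kerSD (A B : lmodType R) (f : {linear A -> B}) x y :
  kerS_sp f x -> kerS_sp f y -> kerS_sp f (x + y).
Proof. by rewrite /kerS_sp linearD => -> ->; rewrite addr0. Qed.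
Lemma kerSZ (A B : lmodType R) (f : {linear A -> B}) r x : kerS_sp f x -> kerS_sp f (r *: x).
Proof. by rewrite /kerS_sp linearZ /= => ->; rewrite scaler0. Qed.
Definition kerS (A B : lmodType R) (f : {linear A -> B}) := Submod (kerS0 f) (@kerSD _ _ f) (@kerSZ _ _ f).

Definition KA (A : lmodType R) := subm (kerS (pAL A)).
Definition jA {A : lmodType R} : {linear KA A -> F A} := incl _.

Lemma Km_in (A B : lmodType R) (f : {linear A -> B}) (k : KA A) : kerS_sp (pAL B) (Fm f (jA k)).
Proof. by rewrite /kerS_sp pALE -pA_nat -pALE (@sub_in _ _ _ k) linear0. Qed.
Definition Km (A B : lmodType R) (f : {linear A -> B}) (k : KA A) : KA B := @mksub _ _ (kerS (pAL B)) _ (Km_in f k).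
Lemma Km_lin (A B : lmodType R) (f : {linear A -> B}) : linear (Km f).
Proof.
move=> r x y; apply: incl_inj; rewrite linearP.
change (Fm f (jA (r *: x + y)) = r *: Fm f (jA x) + Fm f (jA y)).
by rewrite linearP; apply: Fm_lin.
Qed.
Definition KmL (A B : lmodType R) (f : {linear A -> B}) : {linear KA A -> KA B} := mklin (Km_lin f).
Lemma KmLE (A B : lmodType R) (f : {linear A -> B}) k : jA (KmL f k) = Fm f (jA k). Proof. by []. Qed.

Lemma KmLE' (A B : lmodType R) (f : {linear A -> B}) k :
  incl (kerS (pAL B)) (KmL f k) = Fm f (incl (kerS (pAL A)) k). Proof. by []. Qed.
Lemma jAE (A : lmodType R) k : @jA A k = incl (kerS (pAL A)) k. Proof. by []. Qed.

Lemma F_exact (A : lmodType R) : short_exact (@jA A) (pAL A).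
Proof.
split; first exact: incl_inj.
split; first by move=> c; exists (delta R c); rewrite pALE pA_delta.
move=> x; split.
  by move=> H; exists (mksub (S := kerS (pAL A)) H).
by move=> [y <-]; apply: (@sub_in _ _ _ y).
Qed.
End FreeFun.

Lemma ub_seq (I : directed_set) (T : eqType) (idx : T -> I) (s : seq T) :
  exists c, forall y, y \in s -> dle (idx y) c.
Proof.
elim: s => [|y s [c Hc]].
  by case: (d_nonempty I) => a; exists a.
case: (dle_directed (idx y) c) => d [h1 h2]; exists d => z; rewrite inE => /orP [/eqP -> //|/Hc].
by move=> h; apply: dle_trans h h2.
Qed.

Section FLim.
Variables (R : pzRingType) (I : directed_set) (obj : I -> lmodType R)
  (map : forall a b : I, dle a b -> {linear obj a -> obj b}).
Hypothesis map_comp : forall a b c (hab : dle a b) (hbc : dle b c) (hac : dle a c) x,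
  map hac x = map hbc (map hab x).
Variables (L : lmodType R) (sigma : forall a, {linear obj a -> L}).

Definition Fmap' a b (h : dle a b) := FmL (map h).
Definition Fsig a := FmL (sigma a).

Lemma Fmap'_comp a b c (hab : dle a b) (hbc : dle b c) (hac : dle a c) x :
  Fmap' hac x = Fmap' hbc (Fmap' hab x).
Proof. by rewrite !FmLE; apply: Fm_comp => y; apply: map_comp. Qed.

Lemma F_elim : elim map sigma -> elim Fmap' Fsig.
Proof.
move=> [Hco [Hs Hk]]; split.
  move=> a b h p; rewrite !FmLE; symmetry.
  by apply: (@Fm_comp R _ _ _ (map h) (sigma b) (sigma a)) => x; rewrite Hco.
split.
  move=> p.
  have ch : forall y : L, {q : {a : I & obj a} | sigma (projT1 q) (projT2 q) = y}.
    by move=> y; apply: cid; case: (Hs y) => a [x E]; exists (existT _ a x).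
  case: (ub_seq (fun y => projT1 (sval (ch y))) (supp p)) => c Hc.
  pose g (y : L) : fs R (obj c) := match pselect (dle (projT1 (sval (ch y))) c) with
     left h => delta R (map h (projT2 (sval (ch y)))) | right _ => 0 end.
  exists c, (fsum p g).
  rewrite fsum_lin -[RHS]fsum_decomp; apply: fsum_eq => y /fv_supp /Hc hy.
  rewrite /g; case: pselect => [h'|//]; rewrite FmLE Fm_delta Hco.
  by rewrite (proj2_sig (ch y)).
move=> a p Hp.
have pairb : forall (q : obj a * obj a), exists b : I, exists h : dle a b,
    sigma a q.1 = sigma a q.2 -> map h q.1 = map h q.2.
  move=> [x x'] /=; case: (pselect (sigma a x = sigma a x')) => E.
    have : sigma a (x - x') = 0 by rewrite linearB /= E subrr.
    case/Hk => b [h Hb]; exists b, h => _; apply/eqP; rewrite -subr_eq0 -linearB; apply/eqP.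
    exact: Hb.
  by exists a, (dle_refl a).
pose idx q := sval (cid (pairb q)).
case: (ub_seq idx [seq (x, x') | x <- supp p, x' <- supp p]) => c' Hc'.
case: (dle_directed a c') => c [hac hc'c].
exists c, hac.
have Hpair : forall x x', x \in supp p -> x' \in supp p -> sigma a x = sigma a x' ->
    map hac x = map hac x'.
  move=> x x' xs x's E.
  have := Hc' (x, x') (allpairs_f pair xs x's).
  rewrite /idx; case: (cid _) => b [h Hb] /= hbc' .
  have hbc := dle_trans hbc' hc'c.
  by rewrite (map_comp h hbc hac) (map_comp h hbc hac x') (Hb E).
apply: fv_eq => w; rewrite FmLE fv_Fm fv0.
case: (pselect (exists2 x0, x0 \in supp p & map hac x0 = w)).
  case=> x0 x0s E0.
  have : fv (Fm (sigma a) p) (sigma a x0) = 0 by rewrite -FmLE Hp fv0.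
  rewrite fv_Fm => E; rewrite -[in RHS]E; apply: eq_big_seq => x xs; congr (_ * _).
  rewrite -E0; congr (if _ then _ else _); apply/eqP/eqP => Hx.
    by rewrite -(Hco _ _ hac x) Hx Hco.
  exact: Hpair.
move=> n; rewrite big_seq big1 // => x xs.
have : map hac x != w by apply/eqP => E; apply: n; exists x.
by move/negbTE => ->; rewrite mulr0.
Qed.

Definition Kmap' a b (h : dle a b) := KmL (map h).
Definition Ksig a := KmL (sigma a).

Lemma Kmap'_comp a b c (hab : dle a b) (hbc : dle b c) (hac : dle a c) x :
  Kmap' hac x = Kmap' hbc (Kmap' hab x).
Proof. by apply: incl_inj; rewrite /Kmap' !KmLE'; apply: Fm_comp => y; apply: map_comp. Qed.

Lemma K_elim : elim map sigma -> elim Kmap' Ksig.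
Proof.
move=> HD; have [Hco [Hs Hk]] := HD; have [Fco [Fs Fk]] := F_elim HD.
split.
  by move=> a b h k; apply: incl_inj; rewrite /Ksig /Kmap' !KmLE'; apply: (Fco a b h).
split.
  move=> k; have [a [p Hp]] := Fs (jA k).
  have : sigma a (pA p) = 0.
    by rewrite pA_nat -FmLE; change (pA (Fsig a p) = 0); rewrite Hp; apply: (@sub_in _ _ _ k).
  case/Hk => b [h Hb].
  have Hin : kerS_sp (pAL (obj b)) (Fm (map h) p) by rewrite /kerS_sp pALE -pA_nat Hb.
  exists b, (@mksub _ _ (kerS (pAL (obj b))) _ Hin); apply: incl_inj.
  rewrite /Ksig /=; change (Fm (sigma b) (Fm (map h) p) = jA k); rewrite -Hp.
  by have := Fco a b h p; rewrite /Fsig /Fmap' !FmLE.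
move=> a k Hk0.
have : Fsig a (jA k) = 0.
  by rewrite /Fsig FmLE -KmLE Hk0 linear0.
case/Fk => b [h Hb]; exists b, h; apply: incl_inj; rewrite linear0.
by rewrite /Kmap' KmLE' -jAE -FmLE; exact: Hb.
Qed.
End FLim.

Section Pres.
Variables (R R1 : pzRingType) (T : Functor R R1).

Definition idlin (A : lmodType R) : {linear A -> A}.
Proof. refine (@mklin R A A (fun x => x) _); by []. Defined.

Lemma Fmap_ext (A B : lmodType R) (f g : {linear A -> B}) :
  (forall x, f x = g x) -> forall y, Fmap T f y = Fmap T g y.
Proof.
move=> H y; rewrite (@Fmap_comp _ _ T _ _ _ (idlin A) g f) //.
by rewrite (@Fmap_id _ _ T _ (idlin A)).
Qed.

Lemma Fmap_zero (A B : lmodType R) (h : {linear A -> B}) :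
  (forall x, h x = 0) -> forall y, Fmap T h y = 0.
Proof.
move=> H y; have E := @Fmap_add _ _ T _ _ h h h (fun x => ltac:(by rewrite H addr0)) y.
by apply: (@addrI _ (Fmap T h y)); rewrite addr0 -E.
Qed.

Lemma FmapC (A B C : lmodType R) (f : {linear A -> B}) (g : {linear B -> C}) (h : {linear A -> C}) :
  (forall x, g (f x) = h x) -> forall y, Fmap T g (Fmap T f y) = Fmap T h y.
Proof. by move=> H y; rewrite (@Fmap_comp _ _ T _ _ _ f g h). Qed.

Lemma factor_inj (U M' P' : lmodType R) (i' : {linear M' -> P'}) (f : {linear U -> P'}) :
  injective i' -> (forall u, exists m, i' m = f u) ->
  exists s : {linear U -> M'}, forall u, i' (s u) = f u.
Proof.
move=> inj H.
have c : forall u, {m | i' m = f u} by move=> u; apply: cid; apply: H.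
have lin : linear (fun u => sval (c u)).
  move=> r u v; apply: inj; rewrite (proj2_sig (c (r *: u + v))) [in RHS]linearP.
  by rewrite !(proj2_sig (c _)) linearP.
by exists (mklin lin) => u; rewrite mklinE; case: (c u).
Qed.

Lemma lift_ex (A A' M P M' P' : lmodType R) (i : {linear M -> P}) (p : {linear P -> A})
  (i' : {linear M' -> P'}) (p' : {linear P' -> A'}) (g : {linear A -> A'}) :
  projective P -> short_exact i p -> short_exact i' p' ->
  exists gP : {linear P -> P'}, exists gM : {linear M -> M'},
    (forall x, p' (gP x) = g (p x)) /\ (forall m, i' (gM m) = gP (i m)).
Proof.
move=> proj [_ [_ ex]] [inj' [surj' ex']].
have [gP HgP] := proj _ _ p' (complin g p) surj'.
exists gP.
have Hex : forall m, exists m', i' m' = complin gP i m.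
  move=> m; apply/ex'; rewrite complinE HgP complinE.
  have -> : p (i m) = 0 by apply/ex; exists m.
  by rewrite linear0.
have [gM HgM] := factor_inj inj' Hex.
by exists gM; split => [x|m]; rewrite ?HgP ?HgM.
Qed.

Lemma homotopy (A A' M P M' P' : lmodType R) (i : {linear M -> P}) (p : {linear P -> A})
  (i' : {linear M' -> P'}) (p' : {linear P' -> A'}) (g : {linear A -> A'})
  (gP gP' : {linear P -> P'}) (gM gM' : {linear M -> M'}) :
  short_exact i' p' ->
  (forall x, p' (gP x) = g (p x)) -> (forall m, i' (gM m) = gP (i m)) ->
  (forall x, p' (gP' x) = g (p x)) -> (forall m, i' (gM' m) = gP' (i m)) ->
  forall y, Fmap T i y = 0 -> Fmap T gM y = Fmap T gM' y.
Proof.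
move=> [inj' [_ ex']] H1 H2 H3 H4 y Hy.
have dlin : linear (fun x => gP x - gP' x).
  by move=> r x z; rewrite /= [gP _]linearP [gP' _]linearP scalerBr opprD addrACA.
pose dl : {linear P -> P'} := mklin dlin.
have Hex : forall x, exists m', i' m' = dl x.
  by move=> x; apply/ex'; rewrite mklinE linearB /= H1 H3 subrr.
have [s Hs] := factor_inj inj' Hex.
have E : forall m, gM m = gM' m + complin s i m.
  move=> m; apply: inj'; rewrite linearD complinE Hs mklinE H2 H4.
  by rewrite addrC subrK.
rewrite (@Fmap_add _ _ T _ _ gM' (complin s i) gM E).
by rewrite -(@FmapC _ _ _ i s (complin s i)) // Hy linear0 addr0.
Qed.

Definition lifts (A A' M P M' P' : lmodType R) (i : {linear M -> P}) (p : {linear P -> A})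
  (i' : {linear M' -> P'}) (p' : {linear P' -> A'}) (g : A -> A')
  (gP : {linear P -> P'}) (gM : {linear M -> M'}) :=
  (forall x, p' (gP x) = g (p x)) /\ (forall m, i' (gM m) = gP (i m)).

Lemma Fmap_square (A B B' C : lmodType R) (f : {linear A -> B}) (g : {linear B -> C})
  (f' : {linear A -> B'}) (g' : {linear B' -> C}) :
  (forall x, g (f x) = g' (f' x)) -> forall y, Fmap T g (Fmap T f y) = Fmap T g' (Fmap T f' y).
Proof.
move=> H y; rewrite (@FmapC _ _ _ f g (complin g f)) //.
by rewrite (@FmapC _ _ _ f' g' (complin g f)) // => x; rewrite complinE H.
Qed.

Lemma paths_eq (A1 A2 A2' A3 M1 P1 M2 P2 M2' P2' M3 P3 : lmodType R)
  (i1 : {linear M1 -> P1}) (p1 : {linear P1 -> A1})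
  (i2 : {linear M2 -> P2}) (p2 : {linear P2 -> A2})
  (i2' : {linear M2' -> P2'}) (p2' : {linear P2' -> A2'})
  (i3 : {linear M3 -> P3}) (p3 : {linear P3 -> A3})
  (g1 : A1 -> A2) (g2 : A2 -> A3) (g1' : A1 -> A2') (g2' : A2' -> A3)
  f1P f1M f2P f2M f1P' f1M' f2P' f2M' :
  short_exact i3 p3 ->
  lifts i1 p1 i2 p2 g1 f1P f1M -> lifts i2 p2 i3 p3 g2 f2P f2M ->
  lifts i1 p1 i2' p2' g1' f1P' f1M' -> lifts i2' p2' i3 p3 g2' f2P' f2M' ->
  (forall x, g2 (g1 x) = g2' (g1' x)) ->
  forall y, Fmap T i1 y = 0 ->
  Fmap T f2M (Fmap T f1M y) = Fmap T f2M' (Fmap T f1M' y).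
Proof.
move=> ex3 [a1 b1] [a2 b2] [a1' b1'] [a2' b2'] Hg y Hy.
pose g12 := fun x => g2 (g1 x).
have gl : forall x, g2 (g1 x) = g12 x by [].
rewrite (@FmapC _ _ _ f1M f2M (complin f2M f1M)) //.
rewrite (@FmapC _ _ _ f1M' f2M' (complin f2M' f1M')) //.
have [inj3 [_ _]] := ex3.
(* homotopy needs a linear g; we inline the argument *)
have [_ [_ ex3']] := ex3.
have dlin : linear (fun x => f2P (f1P x) - f2P' (f1P' x)).
  move=> r x z; rewrite /= [f1P _]linearP [f2P _]linearP [f1P' _]linearP [f2P' _]linearP.
  by rewrite scalerBr opprD addrACA.
pose dl : {linear P1 -> P3} := mklin dlin.
have Hex : forall x, exists m', i3 m' = dl x.
  by move=> x; apply/ex3'; rewrite mklinE linearB /= a2 a1 a2' a1' Hg subrr.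
have [s Hs] := factor_inj inj3 Hex.
have E : forall m, complin f2M f1M m = complin f2M' f1M' m + complin s i1 m.
  move=> m; apply: inj3; rewrite linearD !complinE Hs mklinE b2 b1 b2' b1'.
  by rewrite addrC subrK.
rewrite (@Fmap_add _ _ T _ _ _ (complin s i1) _ E).
by rewrite -(@FmapC _ _ _ i1 s (complin s i1)) // Hy linear0 addr0.
Qed.

Lemma lift_ex2 (A A' M P M' P' : lmodType R) (i : {linear M -> P}) (p : {linear P -> A})
  (i' : {linear M' -> P'}) (p' : {linear P' -> A'}) (g : {linear A -> A'}) :
  projective P -> short_exact i p -> short_exact i' p' ->
  exists gP, exists gM, lifts i p i' p' g gP gM.
Proof. by move=> pr ex ex'; have [gP [gM [H1 H2]]] := lift_ex g pr ex ex'; exists gP, gM. Qed.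

Lemma id_lifts (A M P : lmodType R) (i : {linear M -> P}) (p : {linear P -> A}) :
  lifts i p i p id (idlin P) (idlin M).
Proof. by []. Qed.
End Pres.

Section Sys.
Variables (R : pzRingType) (I : directed_set) (D : dsystem R I).

Definition dm := fun a b (h : dle a b) => dmap D h.
Lemma dm_comp : forall a b c (hab : dle a b) (hbc : dle b c) (hac : dle a c) x,
  dm hac x = dm hbc (dm hab x).
Proof. exact: dmap_comp. Qed.

Definition FDs : dsystem R I.
refine {| dobj := fun a => fs R (D a); dmap := fun a b h => Fmap' dm h; dmap_id := _; dmap_comp := _ |}.
- by move=> a h x; rewrite /Fmap' FmLE; apply: Fm_id => y; apply: dmap_id.
- by move=> a b c hab hbc hac x; apply: (Fmap'_comp dm_comp).
Defined.

Definition KDs : dsystem R I.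
refine {| dobj := fun a => KA (D a); dmap := fun a b h => Kmap' dm h; dmap_id := _; dmap_comp := _ |}.
- move=> a h x; apply: incl_inj; rewrite /Kmap' KmLE'; apply: Fm_id => y; apply: dmap_id.
- by move=> a b c hab hbc hac x; apply: (Kmap'_comp dm_comp).
Defined.
End Sys.

Lemma Tmap_comp (R R1 : pzRingType) (T : Functor R R1) (I : directed_set) (D : dsystem R I) :
  forall a b c (hab : dle a b) (hbc : dle b c) (hac : dle a c) x,
  Fmap T (dmap D hac) x = Fmap T (dmap D hbc) (Fmap T (dmap D hab) x).
Proof. by move=> a b c hab hbc hac x; apply: Fmap_comp => y; apply: dmap_comp. Qed.

Lemma surjT (R R1 : pzRingType) (T : Functor R R1) : right_exact T -> LSigma_projective T ->
  forall (I : directed_set) (D : dsystem R I) (L : lmodType R) (sigma : forall a, {linear D a -> L}),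
  is_direct_limit (fun a b h => dmap D h) sigma ->
  forall y : T L, exists a x, Fmap T (sigma a) x = y.
Proof.
move=> Hre HLP I D L sigma Hlim y.
have HD := univ_elim (dm_comp (D := D)) Hlim.
have HF := F_elim (dm_comp (D := D)) HD.
have HFU := elim_univ (Fmap'_comp (dm_comp (D := D))) HF.
have HTF := HLP I (FDs D) _ (Fsig sigma) (fun a => @F_proj _ (D a)) HFU.
have [_ [HTFs _]] := univ_elim (@Tmap_comp _ _ T _ (FDs D)) HTF.
have [z Hz] := (Hre _ _ _ _ _ (F_exact L)).2 y.
have [a [za Hza]] := HTFs z.
exists a, (Fmap T (pAL (D a)) za).
rewrite -Hz -Hza; apply: Fmap_square => x.
by rewrite pALE pA_nat.
Qed.

Lemma part2 (R R1 : pzRingType) (T : Functor R R1) :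
  right_exact T -> LSigma_projective T -> type_LSigma T.
Proof.
move=> Hre HLP I D L sigma Hlim.
have Dc := dm_comp (D := D).
have HD := univ_elim Dc Hlim.
have [Hco _] := HD.
have HF := F_elim Dc HD.
have HFU := elim_univ (Fmap'_comp Dc) HF.
have HTF := HLP I (FDs D) _ (Fsig sigma) (fun a => @F_proj _ (D a)) HFU.
have [HTFc [_ HTFk]] := univ_elim (@Tmap_comp _ _ T _ (FDs D)) HTF.
have HK := K_elim Dc HD.
have HKU := elim_univ (Kmap'_comp Dc) HK.
apply: (elim_univ (@Tmap_comp _ _ T _ D)).
split.
  move=> a b h x; apply: FmapC => y; exact: Hco.
split; first exact: surjT Hre HLP I D L sigma Hlim.
move=> a y Hy.
have [z Hz] := (Hre _ _ _ _ _ (F_exact (D a))).2 y.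
have H1 : Fmap T (pAL L) (Fmap T (Fsig sigma a) z) = 0.
  rewrite (@Fmap_square _ _ T _ _ _ _ _ _ (pAL (D a)) (sigma a)); first by rewrite Hz.
  by move=> x; rewrite /Fsig FmLE !pALE pA_nat.
have [w Hw] := ((Hre _ _ _ _ _ (F_exact L)).1 _).1 H1.
have [c [wc Hwc]] := surjT Hre HLP (D := KDs D) HKU w.
have H2 : Fmap T (Fsig sigma a) z = Fmap T (Fsig sigma c) (Fmap T (@jA _ _) wc).
  rewrite -Hw -Hwc; apply: Fmap_square => k; by rewrite /Fsig /Ksig KmLE.
case: (dle_directed a c) => d [had hcd].
pose v := Fmap T (dmap (FDs D) had) z - Fmap T (dmap (FDs D) hcd) (Fmap T (@jA _ _) wc).
have Hv : Fmap T (Fsig sigma d) v = 0.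
  by rewrite linearB (HTFc _ _ had) (HTFc _ _ hcd) H2 subrr.
have [e [he Hve]] := HTFk d v Hv.
have hae := dle_trans had he; have hce := dle_trans hcd he.
have Heq : Fmap T (dmap (FDs D) hae) z = Fmap T (dmap (FDs D) hce) (Fmap T (@jA _ _) wc).
  move: Hve; rewrite linearB -(@Tmap_comp _ _ T _ (FDs D) _ _ _ had he hae).
  by rewrite -(@Tmap_comp _ _ T _ (FDs D) _ _ _ hcd he hce); move/eqP; rewrite subr_eq0 => /eqP.
exists e, hae.
rewrite -Hz (@Fmap_square _ _ T _ _ _ _ _ _ (dmap (FDs D) hae) (pAL (D e))); last first.
  by move=> x; rewrite !pALE pA_nat.
rewrite Heq (@Fmap_square _ _ T _ _ _ _ _ _ (dmap (KDs D) hce) (@jA _ _)); last first.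
  by move=> k.
rewrite (@FmapC _ _ T _ _ _ (@jA _ (D e)) (pAL (D e)) (zlin _ _)); first by apply: Fmap_zero.
by move=> k; exact: (@sub_in _ _ _ k).
Qed.

Lemma FK_lifts (R : pzRingType) (A B : lmodType R) (f : {linear A -> B}) :
  lifts (@jA _ A) (pAL A) (@jA _ B) (pAL B) f (FmL f) (KmL f).
Proof. by split => x; rewrite ?FmLE ?pALE -?pA_nat. Qed.

Lemma self_homot (R R1 : pzRingType) (T : Functor R R1) (A M P M' P' : lmodType R)
  (i : {linear M -> P}) (p : {linear P -> A}) (i' : {linear M' -> P'}) (p' : {linear P' -> A})
  (cP : {linear P -> P'}) (cM : {linear M -> M'}) (dP : {linear P' -> P}) (dM : {linear M' -> M}) :
  short_exact i p -> lifts i p i' p' (idlin A) cP cM -> lifts i' p' i p (idlin A) dP dM ->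
  forall y, Fmap T i y = 0 -> Fmap T dM (Fmap T cM y) = y.
Proof.
move=> ex Hc Hd y Hy.
rewrite (paths_eq (T := T) ex Hc Hd (id_lifts i p) (id_lifts i p) (fun x => erefl) Hy).
by rewrite !(@Fmap_id _ _ T _ (idlin _)).
Qed.

Lemma part1 (R R1 : pzRingType) (T S1T : Functor R R1) (pr : presentation R)
  (iota : forall A, {linear S1T A -> T (presM pr A)}) :
  @first_left_satellite _ _ T S1T pr iota -> type_LSigma T -> type_LSigma S1T.
Proof.
move=> [iinj [iker inat]] HTL I D L sigma Hlim.
have Dc := dm_comp (D := D).
have HD := univ_elim Dc Hlim.
have [Hco _] := HD.
have HF := F_elim Dc HD.
have HK := K_elim Dc HD.
have HFU := elim_univ (Fmap'_comp Dc) HF.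
have HKU := elim_univ (Kmap'_comp Dc) HK.
have HTF := HTL I (FDs D) _ (Fsig sigma) HFU.
have [HTFc [_ HTFk]] := univ_elim (@Tmap_comp _ _ T _ (FDs D)) HTF.
have HTK := HTL I (KDs D) _ (Ksig sigma) HKU.
have [HTKc [HTKs HTKk]] := univ_elim (@Tmap_comp _ _ T _ (KDs D)) HTK.
have [cP_L [cM_L HcL]] := lift_ex2 (idlin L) (@presP_proj _ pr L) (@pres_exact _ pr L) (F_exact L).
have [dP_L [dM_L HdL]] := lift_ex2 (idlin L) (@F_proj _ L) (F_exact L) (@pres_exact _ pr L).
apply: (elim_univ (@Tmap_comp _ _ S1T _ D)).
split.
  move=> a b h x; apply: FmapC => y; exact: Hco.
split.
  move=> s.
  have Hm : Fmap T (pres_i pr L) (iota L s) = 0 by apply/iker; exists s.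
  pose k := Fmap T cM_L (iota L s).
  have Hk : Fmap T (@jA _ L) k = 0.
    rewrite /k (@Fmap_square _ _ T _ _ _ _ _ _ (pres_i pr L) cP_L) ?Hm ?linear0 //.
    by move=> x; apply: (proj2 HcL).
  have [a [ka Hka]] := HTKs k.
  have H2 : Fmap T (Fsig sigma a) (Fmap T (@jA _ _) ka) = 0.
    by rewrite (@Fmap_square _ _ T _ _ _ _ _ _ (Ksig sigma a) (@jA _ _)) ?Hka.
  have [b [h Hb]] := HTFk a _ H2.
  pose kb := Fmap T (dmap (KDs D) h) ka.
  have Hkb : Fmap T (@jA _ _) kb = 0.
    by rewrite /kb (@Fmap_square _ _ T _ _ _ _ _ _ (@jA _ _) (dmap (FDs D) h)).
  have Hkb2 : Fmap T (Ksig sigma b) kb = k by rewrite /kb HTKc.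
  have [dP_b [dM_b Hdb]] := lift_ex2 (idlin (D b)) (@F_proj _ (D b)) (F_exact _) (@pres_exact _ pr (D b)).
  have Hmb : Fmap T (pres_i pr (D b)) (Fmap T dM_b kb) = 0.
    rewrite (@Fmap_square _ _ T _ _ _ _ _ _ (@jA _ _) dP_b) ?Hkb ?linear0 //.
    by move=> x; apply: (proj2 Hdb).
  have [t Ht] := (iker _ _).2 Hmb.
  exists b, t; apply: iinj.
  have [gP [gM Hg]] := lift_ex2 (sigma b) (@presP_proj _ pr (D b)) (pres_exact _ _) (@pres_exact _ pr L).
  rewrite (inat _ _ (sigma b) gP gM (proj1 Hg) (proj2 Hg) t) Ht.
  rewrite -(self_homot (@pres_exact _ pr L) HcL HdL Hm) -/k -Hkb2.
  exact: (paths_eq (T := T) (@pres_exact _ pr L) Hdb Hg (FK_lifts (sigma b)) HdL (fun x => erefl) Hkb).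
move=> a t Ht0.
have Hm : Fmap T (pres_i pr (D a)) (iota _ t) = 0 by apply/iker; exists t.
have [gP [gM Hg]] := lift_ex2 (sigma a) (@presP_proj _ pr (D a)) (pres_exact _ _) (@pres_exact _ pr L).
have [cP_a [cM_a Hca]] := lift_ex2 (idlin (D a)) (@presP_proj _ pr (D a)) (@pres_exact _ pr (D a)) (F_exact (D a)).
have [dP_a [dM_a Hda]] := lift_ex2 (idlin (D a)) (@F_proj _ (D a)) (F_exact (D a)) (@pres_exact _ pr (D a)).
have H1 : Fmap T gM (iota _ t) = 0.
  by rewrite -(inat _ _ (sigma a) gP gM (proj1 Hg) (proj2 Hg) t) Ht0 linear0.
pose k := Fmap T cM_a (iota _ t).
have H2 : Fmap T (Ksig sigma a) k = 0.
  rewrite /k (paths_eq (T := T) (F_exact L) Hca (FK_lifts (sigma a)) Hg HcL (fun x => erefl) Hm).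
  by rewrite H1 linear0.
have Hk : Fmap T (@jA _ _) k = 0.
  rewrite /k (@Fmap_square _ _ T _ _ _ _ _ _ (pres_i pr (D a)) cP_a) ?Hm ?linear0 //.
  by move=> x; apply: (proj2 Hca).
have [b [h Hb]] := HTKk a k H2.
exists b, h; apply: iinj; rewrite linear0.
have [dP_b [dM_b Hdb]] := lift_ex2 (idlin (D b)) (@F_proj _ (D b)) (F_exact _) (@pres_exact _ pr (D b)).
have [g'P [g'M Hg']] := lift_ex2 (dmap D h) (@presP_proj _ pr (D a)) (pres_exact _ _) (@pres_exact _ pr (D b)).
rewrite (inat _ _ (dmap D h) g'P g'M (proj1 Hg') (proj2 Hg') t).
rewrite -(self_homot (@pres_exact _ pr (D a)) Hca Hda Hm) -/k.
rewrite (paths_eq (T := T) (@pres_exact _ pr (D b)) Hda Hg' (FK_lifts (dmap D h)) Hdb (fun x => erefl) Hk).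
have Hb' : Fmap T (KmL (dmap D h)) k = 0 := Hb.
by rewrite Hb' linear0.
Qed.

Theorem theorem2 (Lam Lam1 : pzRingType) (T S1T : Functor Lam Lam1)
  (pr : presentation Lam) (iota : forall A, {linear S1T A -> T (presM pr A)}) :
  @first_left_satellite _ _ T S1T pr iota ->
  (half_exact T -> type_LSigma T -> type_LSigma S1T) /\
  (right_exact T -> type_LSigma S1T -> LSigma_projective T -> type_LSigma T).
Proof.
move=> Hsat; split.
  by move=> _; apply: part1 Hsat.
by move=> Hre _ HLP; apply: part2.
Qed.
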